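(* Let $n=6k+4$ with $k\geq 1$ an integer, and let $\mathcal{V}_n$ be the latin square defined below. Then $\mathcal{V}_n$ has a transversal, and every suitable diagonal of $\mathcal{V}_n$ contains the $k$ entries $$(1,0,3)\ \text{and}\ (3j+2,\ n-6j,\ n-3j+3)\ \text{for } j=1,\dots,k-1,$$ i.e. the entries $(1,0,3),(5,n-6,0),(8,n-12,n-3),(11,n-18,n-6),\ldots,(3k-1,10,3k+10)$ (all coordinates read modulo $n$).
   Context: Rows, columns and symbols are indexed by $\mathbb{Z}_n=\{0,1,\dots,n-1\}$; all arithmetic on symbols is modulo $n$, and congruence conditions on $a,b$ modulo $2$ or $3$ refer to the representatives in $\{0,\dots,n-1\}$. A latin square is viewed as its set of entries $(r,c,s)$ (symbol $s$ in row $r$, column $c$). For $n=6k+4$, $k\ge1$, the latin square $\mathcal{V}_n$ is defined by $\mathcal{V}_n[a,b]=$ $a+b-1$ if $(a,b)\in\{(1,1),(1,2)\}$; $a+b-2$ if $(a,b)\in\{(3,0),(3,2)\}$; $a+b+1$ if $(a,b)=(0,1)$; $a+b+2$ if $(a,b)=(1,0)$; $a+b+3$ if $b\equiv2\pmod3$ and $a=0$; $a+b-3$ if $b>2$, $b\equiv 2\pmod 3$ and $a=3$; $a+b-2$ if $4\le a\le 3k$, $a\equiv 0\pmod3$ and $b\equiv0\pmod2$; $a+b+2$ if $4\le a\le 3k$, $a\equiv1\pmod3$, $b\equiv0\pmod2$ and $b\ne n-2a+2$; $a+b+1$ if $4\le a\le 3k$, $a\equiv1\pmod 3$ and $b\in\{n-2a+2,n-2a+3\}$;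 $a+b+1$ if $4\le a\le 3k$, $a\equiv2\pmod3$ and $b=n-2a+4$; $a+b-1$ if $4\le a\le 3k$, $a\equiv 2\pmod 3$ and $b=n-2a+5$; $a+b$ otherwise. A transversal is a set of $n$ entries containing each row, column and symbol exactly once. For an entry $(r,c,s)$, $\Delta(r,c,s)$ is the unique integer with $\Delta(r,c,s)\equiv s-r-c\pmod n$ and $-n/2<\Delta(r,c,s)\le n/2$. A suitable diagonal is a set of $n$ entries, no two sharing a row or a column, whose $\Delta$-values sum to something congruent to $n/2$ modulo $n$. *)

(* Defs.v *)
From mathcomp Require Import all_boot all_order all_algebra.
Set Implicit Arguments. Unset Strict Implicit. Unset Printing Implicit Defensive.
Import Order.TTheory GRing.Theory Num.Theory.

Notation entry n := ('I_n * 'I_n * 'I_n)%type.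
Definition erow n (e : entry n) : 'I_n := e.1.1.
Definition ecol n (e : entry n) : 'I_n := e.1.2.
Definition esym n (e : entry n) : 'I_n := e.2.

Definition is_ls_transversal n (L S : {set entry n}) : Prop :=
  [/\ S \subset L, #|S| = n,
      forall r : 'I_n, #|[set e in S | erow e == r]| = 1,
      forall c : 'I_n, #|[set e in S | ecol e == c]| = 1 &
      forall s : 'I_n, #|[set e in S | esym e == s]| = 1].

(* Delta(r,c,s): the integer congruent to s - r - c mod n in (-n/2, n/2]
   (n is even in our application). *)
Definition Delta n (e : entry n) : int :=
  let m := ((Posz (esym e) - Posz (erow e) - Posz (ecol e))%R %% Posz n)%Z in
  if (Posz n./2 < m)%R then (m - Posz n)%R else m.

Definition is_ls_suitable_diagonal n (L S : {set entry n}) : Prop :=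
  [/\ S \subset L, #|S| = n,
      {in S &, forall e f, e != f -> (erow e != erow f) && (ecol e != ecol f)} &
      (\sum_(e in S) Delta e == Posz n./2 %[mod Posz n])%Z].

Definition N (k : nat) : nat := (6 * k).+4.

(* Offset V_n[a,b] - (a+b), following the case list in order (first match). *)
Definition Voff (k a b : nat) : int :=
  let n := N k in
  let mid := (4 <= a) && (a <= 3 * k) in
  if (a == 1) && ((b == 1) || (b == 2)) then (-1)%Z
  else if (a == 3) && ((b == 0) || (b == 2)) then (-2)%Z
  else if (a == 0) && (b == 1) then 1%Z
  else if (a == 1) && (b == 0) then 2%Z
  else if (b %% 3 == 2) && (a == 0) then 3%Z
  else if (2 < b) && (b %% 3 == 2) && (a == 3) then (-3)%Z
  else if mid && (a %% 3 == 0) && (b %% 2 == 0) then (-2)%Z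
  else if mid && (a %% 3 == 1) && (b %% 2 == 0) && (b != n - 2 * a + 2) then 2%Z
  else if mid && (a %% 3 == 1) && ((b == n - 2 * a + 2) || (b == n - 2 * a + 3)) then 1%Z
  else if mid && (a %% 3 == 2) && (b == n - 2 * a + 4) then 1%Z
  else if mid && (a %% 3 == 2) && (b == n - 2 * a + 5) then (-1)%Z
  else 0%Z.

Definition Vsym (k : nat) (a b : 'I_(N k)) : 'I_(N k) :=
  inord (absz ((Posz (a + b) + Voff k a b)%R %% Posz (N k))%Z).

Arguments Vsym k a b : clear implicits.

Definition Vsq (k : nat) : {set entry (N k)} :=
  [set e | esym e == Vsym k (erow e) (ecol e)].

Definition mkentry (k r c s : nat) : entry (N k) :=
  (inord (r %% N k), inord (c %% N k), inord (s %% N k)).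

(* Main.v *)
Require Import Defs.
From mathcomp Require Import all_boot all_order all_algebra.
From mathcomp Require Import zify.
Import Order.TTheory GRing.Theory Num.Theory.

Definition colf (k a : nat) : nat :=
  if a == 0 then 5
  else if a == 1 then 0
  else if a == 2 then 3
  else if a == 3 then 1
  else if a <= 3 * k then (if a %% 3 == 0 then N k + 7 - 2 * a else N k + 4 - 2 * a)
  else if a <= 3 * k + 4 then N k + 6 - 2 * a
  else if a <= 6 * k + 1 then (if a %% 3 == 2 then 2 * N k + 4 - 2 * a else 2 * N k + 7 - 2 * a)
  else 2 * N k + 5 - 2 * a.

Ltac ifsolve := repeat (case: ifP; [ intro; try lia | let Hf := fresh "Hf" in intro Hf; first [ (exfalso; lia) | clear Hf ] ]); try lia.


Lemma c0 (k : nat) (hk : 1 <= k) : colf k 0 = 5. Proof. by []. Qed.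
Lemma c1 (k : nat) (hk : 1 <= k) : colf k 1 = 0. Proof. by []. Qed.
Lemma c2 (k : nat) (hk : 1 <= k) : colf k 2 = 3. Proof. by []. Qed.
Lemma c3 (k : nat) (hk : 1 <= k) : colf k 3 = 1. Proof. by []. Qed.
Lemma c4 (k : nat) (hk : 1 <= k) a : 4 <= a <= 3 * k -> a %% 3 = 0 -> colf k a = N k + 7 - 2 * a.
Proof. move=> h1 h2; rewrite /colf /N; ifsolve. Qed.
Lemma c5 (k : nat) (hk : 1 <= k) a : 4 <= a <= 3 * k -> a %% 3 <> 0 -> colf k a = N k + 4 - 2 * a.
Proof. move=> h1 h2; rewrite /colf /N; ifsolve. Qed.
Lemma c6 (k : nat) (hk : 1 <= k) a : 3 * k + 1 <= a <= 3 * k + 4 -> colf k a = N k + 6 - 2 * a.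
Proof. move=> h1; rewrite /colf /N; ifsolve. Qed.
Lemma c7 (k : nat) (hk : 1 <= k) a : 3 * k + 5 <= a <= 6 * k + 1 -> a %% 3 = 2 -> colf k a = 2 * N k + 4 - 2 * a.
Proof. move=> h1 h2; rewrite /colf /N; ifsolve. Qed.
Lemma c8 (k : nat) (hk : 1 <= k) a : 3 * k + 5 <= a <= 6 * k + 1 -> a %% 3 <> 2 -> colf k a = 2 * N k + 7 - 2 * a.
Proof. move=> h1 h2; rewrite /colf /N; ifsolve. Qed.
Lemma c9 (k : nat) (hk : 1 <= k) a : 6 * k + 2 <= a -> colf k a = 2 * N k + 5 - 2 * a.
Proof. move=> h1; rewrite /colf /N; ifsolve. Qed.

Lemma v0 (k : nat) (hk : 1 <= k) : Voff k 0 5 = Posz 3. Proof. by rewrite /Voff. Qed.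
Lemma v1 (k : nat) (hk : 1 <= k) : Voff k 1 0 = Posz 2. Proof. by rewrite /Voff. Qed.
Lemma v2 (k : nat) (hk : 1 <= k) : Voff k 2 3 = Posz 0. Proof. by rewrite /Voff /=. Qed.
Lemma v3 (k : nat) (hk : 1 <= k) : Voff k 3 1 = Posz 0. Proof. by rewrite /Voff /=. Qed.
Lemma v4 (k : nat) (hk : 1 <= k) a : 4 <= a <= 3 * k -> a %% 3 = 0 -> Voff k a (N k + 7 - 2 * a) = Posz 0.
Proof. move=> h1 h2; rewrite /Voff /N; ifsolve. Qed.
Lemma v5 (k : nat) (hk : 1 <= k) a : 4 <= a <= 3 * k -> a %% 3 = 1 -> Voff k a (N k + 4 - 2 * a) = Posz 2.
Proof. move=> h1 h2; rewrite /Voff /N; ifsolve. Qed.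
Lemma v5' (k : nat) (hk : 1 <= k) a : 4 <= a <= 3 * k -> a %% 3 = 2 -> Voff k a (N k + 4 - 2 * a) = Posz 1.
Proof. move=> h1 h2; rewrite /Voff /N; ifsolve. Qed.
Lemma vg (k : nat) (hk : 1 <= k) a b : 3 * k + 1 <= a -> Voff k a b = Posz 0.
Proof. move=> h1; rewrite /Voff /N; ifsolve. Qed.


Lemma colf_spec k a : 1 <= k -> a < N k ->
  (a = 0 /\ colf k a = 5 /\ Voff k a (colf k a) = (Posz 3)) \/
  (a = 1 /\ colf k a = 0 /\ Voff k a (colf k a) = (Posz 2)) \/
  (a = 2 /\ colf k a = 3 /\ Voff k a (colf k a) = (Posz 0)) \/
  (a = 3 /\ colf k a = 1 /\ Voff k a (colf k a) = (Posz 0)) \/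
  (4 <= a <= 3 * k /\ a %% 3 = 0 /\ colf k a = N k + 7 - 2 * a /\ Voff k a (colf k a) = (Posz 0)) \/
  (4 <= a <= 3 * k /\ a %% 3 = 1 /\ colf k a = N k + 4 - 2 * a /\ Voff k a (colf k a) = (Posz 2)) \/
  (4 <= a <= 3 * k /\ a %% 3 = 2 /\ colf k a = N k + 4 - 2 * a /\ Voff k a (colf k a) = (Posz 1)) \/
  (3 * k + 1 <= a <= 3 * k + 4 /\ colf k a = N k + 6 - 2 * a /\ Voff k a (colf k a) = (Posz 0)) \/
  (3 * k + 5 <= a <= 6 * k + 1 /\ a %% 3 = 2 /\ colf k a = 2 * N k + 4 - 2 * a /\ Voff k a (colf k a) = (Posz 0)) \/
  (3 * k + 5 <= a <= 6 * k + 1 /\ a %% 3 <> 2 /\ colf k a = 2 * N k + 7 - 2 * a /\ Voff k a (colf k a) = (Posz 0)) \/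
  (6 * k + 2 <= a /\ colf k a = 2 * N k + 5 - 2 * a /\ Voff k a (colf k a) = (Posz 0)).
Proof.
move=> hk ha.
have : a = 0 \/ a = 1 \/ a = 2 \/ a = 3 \/ 4 <= a <= 3 * k \/ 3 * k + 1 <= a by rewrite /N in ha; lia.
case=> [->|[->|[->|[->|[h|h]]]]].
- by left; rewrite (c0 _ hk) (v0 _ hk).
- by right; left; rewrite (c1 _ hk) (v1 _ hk).
- by do 2 right; left; rewrite (c2 _ hk) (v2 _ hk).
- by do 3 right; left; rewrite (c3 _ hk) (v3 _ hk).
- have : a %% 3 = 0 \/ a %% 3 = 1 \/ a %% 3 = 2 by lia.
  case=> [h3|[h3|h3]].
  + do 4 right; left; rewrite (c4 _ hk) // (v4 _ hk) //.
  + do 5 right; left; rewrite (c5 _ hk) ?(v5 _ hk) //; lia.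
  + do 6 right; left; rewrite (c5 _ hk) ?(v5' _ hk) //; lia.
- rewrite (vg _ hk) //.
  have : a <= 3 * k + 4 \/ (3 * k + 5 <= a <= 6 * k + 1 /\ a %% 3 = 2) \/
           (3 * k + 5 <= a <= 6 * k + 1 /\ a %% 3 <> 2) \/ 6 * k + 2 <= a by lia.
  case=> [h2|[[h2 h3]|[[h2 h3]|h2]]].
  + do 7 right; left; rewrite (c6 _ hk) //; lia.
  + do 8 right; left; rewrite (c7 _ hk) //.
  + do 9 right; left; rewrite (c8 _ hk) //.
  + do 10 right; rewrite (c9 _ hk) //.
Qed.

Lemma colf_lt k a : 1 <= k -> a < N k -> colf k a < N k.
Proof. move=> hk ha; move: (@colf_spec _ _ hk ha); rewrite /N in ha *; lia. Qed.

Lemma colf_inj k a a' : 1 <= k -> a < N k -> a' < N k -> colf k a = colf k a' -> a = a'.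
Proof.
move=> hk ha ha'; move: (@colf_spec _ _ hk ha) (@colf_spec _ _ hk ha'); rewrite /N in ha ha' * => H1 H2.
repeat match goal with H : _ \/ _ |- _ => destruct H end; lia.
Qed.

Lemma modn_cases (x y n : nat) : 0 < n -> x < 3 * n -> y < 3 * n -> x %% n = y %% n ->
  x = y \/ x = y + n \/ y = x + n \/ x = y + 2 * n \/ y = x + 2 * n.
Proof.
move=> n0 hx hy E.
have hxq : x %/ n < 3 by rewrite ltn_divLR.
have hyq : y %/ n < 3 by rewrite ltn_divLR.
have ex := divn_eq x n; have ey := divn_eq y n.
rewrite E in ex.
move: hxq hyq ex ey; case: (x %/ n) => [|[|[|?]]] //; case: (y %/ n) => [|[|[|?]]] // _ _; lia.
Qed.

Definition SP k a x :=
  (a = 0 /\ x = 8) \/ (a = 1 /\ x = 3) \/ (a = 2 /\ x = 5) \/ (a = 3 /\ x = 4) \/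
  (4 <= a <= 3 * k /\ a %% 3 = 0 /\ x = N k + 7 - a) \/
  (4 <= a <= 3 * k /\ a %% 3 = 1 /\ x = N k + 6 - a) \/
  (4 <= a <= 3 * k /\ a %% 3 = 2 /\ x = N k + 5 - a) \/
  (3 * k + 1 <= a <= 3 * k + 4 /\ x = N k + 6 - a) \/
  (3 * k + 5 <= a <= 6 * k + 1 /\ a %% 3 = 2 /\ x = 2 * N k + 4 - a) \/
  (3 * k + 5 <= a <= 6 * k + 1 /\ a %% 3 <> 2 /\ x = 2 * N k + 7 - a) \/
  (6 * k + 2 <= a /\ x = 2 * N k + 5 - a).
Lemma symx_spec k a : 1 <= k -> a < N k ->
  SP k a (a + colf k a + absz (Voff k a (colf k a))).
Proof.
move=> hk ha; rewrite /SP.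
move: (@colf_spec _ _ hk ha); rewrite /N in ha * => H1.
case: H1 => [H|H1].
  by left; move: H; rewrite /=; repeat (let h := fresh in case=> h); match goal with E : Voff _ _ _ = _ |- _ => rewrite E end; rewrite /absz; lia.
case: H1 => [H|H1].
  by do 1 right; left; move: H; rewrite /=; repeat (let h := fresh in case=> h); match goal with E : Voff _ _ _ = _ |- _ => rewrite E end; rewrite /absz; lia.
case: H1 => [H|H1].
  by do 2 right; left; move: H; rewrite /=; repeat (let h := fresh in case=> h); match goal with E : Voff _ _ _ = _ |- _ => rewrite E end; rewrite /absz; lia.
case: H1 => [H|H1].
  by do 3 right; left; move: H; rewrite /=; repeat (let h := fresh in case=> h); match goal with E : Voff _ _ _ = _ |- _ => rewrite E end; rewrite /absz; lia.
case: H1 => [H|H1].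
  by do 4 right; left; move: H; rewrite /=; repeat (let h := fresh in case=> h); match goal with E : Voff _ _ _ = _ |- _ => rewrite E end; rewrite /absz; lia.
case: H1 => [H|H1].
  by do 5 right; left; move: H; rewrite /=; repeat (let h := fresh in case=> h); match goal with E : Voff _ _ _ = _ |- _ => rewrite E end; rewrite /absz; lia.
case: H1 => [H|H1].
  by do 6 right; left; move: H; rewrite /=; repeat (let h := fresh in case=> h); match goal with E : Voff _ _ _ = _ |- _ => rewrite E end; rewrite /absz; lia.
case: H1 => [H|H1].
  by do 7 right; left; move: H; rewrite /=; repeat (let h := fresh in case=> h); match goal with E : Voff _ _ _ = _ |- _ => rewrite E end; rewrite /absz; lia.
case: H1 => [H|H1].
  by do 8 right; left; move: H; rewrite /=; repeat (let h := fresh in case=> h); match goal with E : Voff _ _ _ = _ |- _ => rewrite E end; rewrite /absz; lia.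
case: H1 => [H|H1].
  by do 9 right; left; move: H; rewrite /=; repeat (let h := fresh in case=> h); match goal with E : Voff _ _ _ = _ |- _ => rewrite E end; rewrite /absz; lia.
by do 10 right; move: H1; rewrite /=; repeat (let h := fresh in case=> h); match goal with E : Voff _ _ _ = _ |- _ => rewrite E end; rewrite /absz; lia.
Qed.

Definition symn k a := (a + colf k a + absz (Voff k a (colf k a))) %% N k.

Lemma pure k a a' x x' : 1 <= k -> a < N k -> a' < N k -> SP k a x -> SP k a' x' ->
  x = x' \/ x = x' + N k \/ x' = x + N k \/ x = x' + 2 * N k \/ x' = x + 2 * N k -> a = a'.
Proof.
rewrite /SP /N => hk ha ha' H1 H2 H3.
repeat match goal with H : _ \/ _ |- _ => destruct H end; lia.
Qed.

Lemma symn_inj k a a' : 1 <= k -> a < N k -> a' < N k -> symn k a = symn k a' -> a = a'.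
Proof.
move=> hk ha ha'; rewrite /symn => E.
have H1 := @symx_spec _ _ hk ha; have H2 := @symx_spec _ _ hk ha'.
have hx : a + colf k a + absz (Voff k a (colf k a)) < 3 * N k.
  by move: H1 ha; rewrite /SP /N; lia.
have hx' : a' + colf k a' + absz (Voff k a' (colf k a')) < 3 * N k.
  by move: H2 ha'; rewrite /SP /N; lia.
have n0 : 0 < N k by rewrite /N.
have H3 := @modn_cases _ _ _ n0 hx hx' E.
exact: (@pure _ _ _ _ _ hk ha ha' H1 H2 H3).
Qed.

Arguments colf_lt {k a}.
Arguments colf_inj {k a a'}.
Arguments symn_inj {k a a'}.
Arguments colf_spec {k a}.

Lemma card_proj (m : nat) (T : finType) (f : 'I_m -> T) (p : T -> 'I_m) (x : 'I_m) :
  injective (fun a => p (f a)) -> #|[set e in f @: setT | p e == x]| = 1.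
Proof.
move=> inj.
have /codomP [a ha] := injF_onto inj x.
suff -> : [set e in f @: setT | p e == x] = [set f a] by rewrite cards1.
apply/setP => e; rewrite !inE; apply/andP/eqP.
- case=> /imsetP [a' _ ->] /eqP h; congr f; apply: inj; by rewrite h ha.
- move=> ->; split; [exact: imset_f | by rewrite -ha].
Qed.

Lemma Voff_colf_ge0 k a : 1 <= k -> a < N k -> (0 <= Voff k a (colf k a))%R.
Proof. move=> hk ha; move: (colf_spec hk ha); lia. Qed.
Arguments Voff_colf_ge0 {k a}.

Definition fT k (a : 'I_(N k)) : entry (N k) :=
  (a, inord (colf k a), Vsym k a (inord (colf k a))).

Lemma Vsym_fT k (a : 'I_(N k)) : 1 <= k ->
  nat_of_ord (Vsym k a (inord (colf k a))) = symn k a.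
Proof.
move=> hk.
have ha := ltn_ord a.
have hc : colf k a < N k by apply: colf_lt.
have hv := Voff_colf_ge0 hk ha.
rewrite /Vsym /symn (inordK hc).
set v := Voff k a (colf k a).
have -> : v = Posz `|v|%N by lia.
rewrite -PoszD modz_nat /= inordK //.
by rewrite ltn_mod.
Qed.

Lemma part1 k : 1 <= k -> exists S : {set entry (N k)}, is_ls_transversal (Vsq k) S.
Proof.
move=> hk; exists (fT k @: setT); split.
- apply/subsetP => e /imsetP [a _ ->]; by rewrite inE /fT /esym /erow /ecol /=.
- rewrite card_imset ?cardsT ?card_ord //.
  by move=> a a' /(congr1 (fun e => e.1.1)).
- move=> r; apply: card_proj; by move=> a a'.
- move=> c; apply: card_proj => a a' /= /(congr1 val).
  rewrite /ecol /= !inordK; try (apply: colf_lt => //).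
  move/(colf_inj hk (ltn_ord a) (ltn_ord a')); exact: val_inj.
- move=> s; apply: card_proj => a a' /= /(congr1 val).
  rewrite /esym /= !Vsym_fT //.
  move/(symn_inj hk (ltn_ord a) (ltn_ord a')); exact: val_inj.
Qed.

Ltac ifsolve2 := repeat (case: ifP; intro; try (exfalso; lia)); try lia.

Section Part2a.
Local Open Scope ring_scope.


Definition Mx k (r : nat) : int :=
  if r == 0%N then 3 else if r == 1%N then 2
  else if (4 <= r <= 3 * k)%N && (r %% 3 == 1)%N then 2
  else if (4 <= r <= 3 * k)%N && (r %% 3 == 2)%N then 1 else 0.

Definition mn k (r : nat) : int :=
  if r == 1%N then -1 else if r == 3%N then -3
  else if (4 <= r <= 3 * k)%N && (r %% 3 == 0)%N then -2
  else if (4 <= r <= 3 * k)%N && (r %% 3 == 2)%N then -1 else 0.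

Lemma Voff_bounds k r b : (mn k r <= Voff k r b) && (Voff k r b <= Mx k r).
Proof. rewrite /mn /Mx /Voff /N; ifsolve. Qed.

Lemma Voff_range k r b : (-3 <= Voff k r b) && (Voff k r b <= 3).
Proof. rewrite /Voff /N; ifsolve. Qed.

Lemma Voff_row1 k b : Voff k 1 b = 2 -> b = 0%N.
Proof. rewrite /Voff /N; ifsolve. Qed.

Lemma Voff_rowj k a b : (4 <= a <= 3 * k)%N -> (a %% 3 = 2)%N -> Voff k a b = 1 ->
  b = (N k - 2 * a + 4)%N.
Proof. move=> h1 h2; rewrite /Voff /N; ifsolve. Qed.

Lemma modz_neg (v : int) (d : nat) : - Posz d <= v < 0 -> (v %% Posz d)%Z = v + Posz d.
Proof.
move=> h.
rewrite -modzDl modz_small; first lia.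
lia.
Qed.

Lemma val_Vsym k (r c : 'I_(N k)) :
  Posz (nat_of_ord (Vsym k r c)) = ((Posz (r + c) + Voff k r c) %% Posz (N k))%Z.
Proof.
rewrite /Vsym inordK.
- rewrite gez0_abs //; exact: modz_ge0.
- have h1 := @modz_ge0 (Posz (r + c) + Voff k r c) (Posz (N k)) isT.
  have h2 := @ltz_pmod (Posz (r + c) + Voff k r c) (Posz (N k)) isT.
  move: h1 h2; rewrite /N; set m := ((_ + _) %% _)%Z; lia.
Qed.

Lemma Delta_V k (e : entry (N k)) : (1 <= k)%N -> e \in Vsq k ->
  Delta e = Voff k (erow e) (ecol e).
Proof.
move=> hk; rewrite inE => /eqP he.
have hv := Voff_range k (erow e) (ecol e).
rewrite /Delta he val_Vsym.
set v := Voff k _ _.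
have key : forall x y : int, (((x %% Posz (N k))%Z + y) %% Posz (N k))%Z = ((x + y) %% Posz (N k))%Z.
  by move=> x y; exact: modzDml.
rewrite -(addrA _ (- _) (- _)) key.
have -> : Posz (erow e + ecol e) + v + (- Posz (erow e) - Posz (ecol e)) = v by lia.
have hh : ((N k)./2 = 3 * k + 2)%N by rewrite /N; lia.
rewrite hh.
have [hpos|hneg] := lerP 0 v.
- rewrite modz_small; last by rewrite /N; lia.
  case: ifP => //; lia.
- rewrite modz_neg; last by rewrite /N; lia.
  case: ifP => H; rewrite /N in H *; lia.
Qed.

Lemma sum_mid (F : nat -> int) (g0 g1 g2 : int) k' :
  (forall r, (4 <= r < 3 * k' + 4)%N ->
     F r = if (r %% 3 == 0)%N then g0 else if (r %% 3 == 1)%N then g1 else g2) ->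
  \sum_(4 <= r < 3 * k' + 4) F r = (g0 + g1 + g2) *+ k'.
Proof.
elim: k' => [|k' IH] H; first by rewrite big_geq.
have -> : (3 * k'.+1 + 4 = (3 * k' + 6).+1)%N by lia.
rewrite big_nat_recr /=; last by lia.
have -> : (3 * k' + 6 = (3 * k' + 5).+1)%N by lia.
rewrite big_nat_recr /=; last by lia.
have -> : (3 * k' + 5 = (3 * k' + 4).+1)%N by lia.
rewrite big_nat_recr /=; last by lia.
rewrite IH; last by move=> r hr; apply: H; lia.
rewrite (H (3 * k' + 4)%N); last by lia.
rewrite (H (3 * k' + 4).+1); last by lia.
rewrite (H (3 * k' + 4).+2); last by lia.
have -> : ((3 * k' + 4) %% 3 = 1)%N by lia.
have -> : ((3 * k' + 4).+1 %% 3 = 2)%N by lia.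
have -> : ((3 * k' + 4).+2 %% 3 = 0)%N by lia.
rewrite /= mulrS.
move: (_ *+ k') => t; lia.
Qed.

Lemma sum_total (F : nat -> int) k g0 g1 g2 : (1 <= k)%N ->
  (forall r, (4 <= r <= 3 * k)%N ->
     F r = if (r %% 3 == 0)%N then g0 else if (r %% 3 == 1)%N then g1 else g2) ->
  (forall r, (3 * k + 1 <= r)%N -> F r = 0) ->
  \sum_(r < N k) F r = F 0%N + F 1%N + F 2%N + F 3%N + (g0 + g1 + g2) *+ (k - 1).
Proof.
case: k => // k' _ hmid hhigh.
rewrite -(big_mkord xpredT) (@big_cat_nat _ _ _ 4) //=.
rewrite (@big_cat_nat _ _ _ (3 * k'.+1 + 1) 4 (N k'.+1)) //=; try (rewrite /N; lia).
have -> : \sum_(3 * k'.+1 + 1 <= i < N k'.+1) F i = 0.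
  rewrite big_nat_cond big1 // => i /andP [/andP [h1 h2] _]; apply: hhigh; lia.
have -> : (3 * k'.+1 + 1 = 3 * k' + 4)%N by lia.
rewrite (@sum_mid F g0 g1 g2 k'); last by move=> r hr; apply: hmid; lia.
rewrite !big_nat_recl // big_geq // addr0 subn1 /=.
lia.
Qed.

Lemma sum_Mx k : (1 <= k)%N -> \sum_(r < N k) Mx k r = Posz (3 * k + 2).
Proof.
move=> hk; rewrite (@sum_total _ k 0 2 1) //.
- rewrite /Mx /=. have -> : (0 + 2 + 1 : int) = Posz 3 by []. lia.
- move=> r hr; rewrite /Mx; ifsolve2.
- move=> r hr; rewrite /Mx; ifsolve2.
Qed.

Lemma sum_mn k : (1 <= k)%N -> \sum_(r < N k) mn k r = - Posz (3 * k + 1).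
Proof.
move=> hk; rewrite (@sum_total _ k (-2) 0 (-1)) //.
- rewrite /mn /=. have -> : (-2 + 0 + -1 : int) = - Posz 3 by []. lia.
- move=> r hr; rewrite /mn; ifsolve2.
- move=> r hr; rewrite /mn; ifsolve2.
Qed.

End Part2a.

Section Part2b.
Local Open Scope ring_scope.

Lemma entry_eq k (e : entry (N k)) (r c s : nat) :
  nat_of_ord (erow e) = (r %% N k)%N -> nat_of_ord (ecol e) = (c %% N k)%N ->
  nat_of_ord (Defs.esym e) = (s %% N k)%N -> e = mkentry k r c s.
Proof.
case: e => [[x y] z] /= hx hy hz; rewrite /mkentry.
congr (_, _, _); apply/val_inj; by rewrite /= inordK ?ltn_mod.
Qed.

Lemma part2 k (hk : (1 <= k)%N) (S : {set entry (N k)}) :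
  is_ls_suitable_diagonal (Vsq k) S ->
  mkentry k 1 0 3 \in S /\
  (forall j : nat, (1 <= j <= k - 1)%N ->
     mkentry k (3 * j + 2) (N k - 6 * j) (N k - 3 * j + 3) \in S).
Proof.
case=> hsub hcard hdist hsum.
have inj : {in S &, injective (@erow (N k))}.
  move=> e f he hf h; apply/eqP; apply: contraT => hne.
  by move: (hdist e f he hf hne); rewrite h eqxx.
have rowsT : (@erow (N k)) @: S = setT.
  apply/eqP; by rewrite eqEcard subsetT /= cardsT card_ord card_in_imset // hcard.
have sMx : \sum_(e in S) Mx k (erow e) = Posz (3 * k + 2).
  rewrite -(big_imset (fun r : 'I_(N k) => Mx k r) inj) rowsT.
  rewrite -(@sum_Mx k hk); apply: eq_bigl => r; by rewrite inE.
have smn : \sum_(e in S) mn k (erow e) = - Posz (3 * k + 1).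
  rewrite -(big_imset (fun r : 'I_(N k) => mn k r) inj) rowsT.
  rewrite -(@sum_mn k hk); apply: eq_bigl => r; by rewrite inE.
have hsumV : \sum_(e in S) Delta e = \sum_(e in S) Voff k (erow e) (ecol e).
  apply: eq_bigr => e he; apply: Delta_V => //; exact: (subsetP hsub).
have hle : forall e, e \in S -> mn k (erow e) <= Voff k (erow e) (ecol e) <= Mx k (erow e).
  move=> e _; exact: Voff_bounds.
have hVle : \sum_(e in S) Voff k (erow e) (ecol e) <= Posz (3 * k + 2).
  rewrite -sMx; apply: ler_sum => e he; by case/andP: (hle e he).
have hVge : - Posz (3 * k + 1) <= \sum_(e in S) Voff k (erow e) (ecol e).
  rewrite -smn; apply: ler_sum => e he; by case/andP: (hle e he).
have hV : \sum_(e in S) Voff k (erow e) (ecol e) = Posz (3 * k + 2).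
  move: hsum; rewrite hsumV eqz_mod_dvd => /dvdzP [q hq].
  have hh : ((N k)./2 = 3 * k + 2)%N by rewrite /N; lia.
  move: hq hVle hVge; rewrite hh /N; move: (\sum_(e in S) _) => X.
  have : q = 0 \/ 1 <= q \/ q <= -1 by lia.
  case=> [->|[h|h]]; nia.
have hzero : forall e, e \in S -> Voff k (erow e) (ecol e) = Mx k (erow e).
  move=> e he.
  have := @psumr_eq0P _ _ (fun e => e \in S) (fun e => Mx k (erow e) - Voff k (erow e) (ecol e)).
  move=> /(_ _ _ e he) H.
  suff : Mx k (erow e) - Voff k (erow e) (ecol e) = 0 by lia.
  apply: H.
  - move=> f hf; move: (hle f hf); lia.
  - by rewrite sumrB sMx hV subrr.
split.
- have : (inord 1 : 'I_(N k)) \in (@erow (N k)) @: S by rewrite rowsT inE.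
  case/imsetP => e he hr.
  have hr1 : nat_of_ord (erow e) = 1%N by rewrite -hr inordK.
  have hz := hzero e he.
  rewrite hr1 in hz; rewrite /Mx /= in hz.
  have hc := @Voff_row1 _ _ hz.
  have hes : e \in Vsq k := subsetP hsub e he.
  move: hes; rewrite inE => /eqP hes.
  suff <- : e = mkentry k 1 0 3 by [].
  apply: entry_eq; rewrite ?hr1 ?hc ?modn_small //.
  apply/eqP; rewrite -eqz_nat; apply/eqP.
  rewrite hes val_Vsym hr1 hz hc modz_small //; rewrite /N; lia.
- move=> j hj.
  have : (inord (3 * j + 2) : 'I_(N k)) \in (@erow (N k)) @: S by rewrite rowsT inE.
  case/imsetP => e he hr.
  have hr1 : nat_of_ord (erow e) = (3 * j + 2)%N by rewrite -hr inordK //; rewrite /N; lia.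
  have hz := hzero e he.
  have hMx : Mx k (3 * j + 2) = 1 by rewrite /Mx; ifsolve2.
  rewrite hr1 hMx in hz.
  have hc := @Voff_rowj _ _ _ (ltac:(lia) : (4 <= 3 * j + 2 <= 3 * k)%N) (ltac:(lia)) hz.
  have hes : e \in Vsq k := subsetP hsub e he.
  move: hes; rewrite inE => /eqP hes.
  suff <- : e = mkentry k (3 * j + 2) (N k - 6 * j) (N k - 3 * j + 3) by [].
  apply: entry_eq.
  + rewrite hr1 modn_small //; rewrite /N; lia.
  + rewrite hc modn_small; rewrite /N; lia.
  + apply/eqP; rewrite -eqz_nat; apply/eqP.
    rewrite hes val_Vsym hr1 hz hc -PoszD modz_nat.
    congr (Posz (_ %% _)); rewrite /N; lia.
Qed.

End Part2b.

Theorem lemma9 (k : nat) (hk : 1 <= k) :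
  (exists S : {set entry (N k)}, is_ls_transversal (Vsq k) S) /\
  (forall S : {set entry (N k)}, is_ls_suitable_diagonal (Vsq k) S ->
     mkentry k 1 0 3 \in S /\
     (forall j : nat, 1 <= j <= k - 1 ->
        mkentry k (3 * j + 2) (N k - 6 * j) (N k - 3 * j + 3) \in S)).
Proof.
split; first exact: part1.
move=> S hS; exact: part2.
Qed.
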